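(* Let $V$ be a toroidal vertex algebra, let $K_Y(V)=\{v\in V\mid Y(v;x_0,\mathbf{x})=0\}$ (an ideal of $V$) and $\overline{V}=V/K_Y(V)$, the quotient toroidal vertex algebra. Then $\overline{V}$ is a simple toroidal vertex algebra if and only if $V^0$ is a simple toroidal vertex algebra.
   Context: Fix a positive integer $r$. Write $\mathbf{x}=(x_1,\dots,x_r)$, $\mathbf{x}^{\mathbf{m}}=x_1^{m_1}\cdots x_r^{m_r}$ (similarly for other variables), $\mathbf{z}\mathbf{y}=(z_1y_1,\dots,z_ry_r)$. For a vector space $W$ put $\mathcal{E}(W,r)=\mathrm{Hom}(W,W[[x_1^{\pm1},\dots,x_r^{\pm1}]]((x_0)))$. A toroidal vertex algebra is a vector space $V$ with a linear map $Y(\cdot;x_0,\mathbf{x}):V\to\mathcal{E}(V,r)$, $v\mapsto\sum_{(m_0,\mathbf{m})\in\mathbb{Z}\times\mathbb{Z}^r}v_{m_0,\mathbf{m}}x_0^{-m_0-1}\mathbf{x}^{-\mathbf{m}}$, and a vector $\mathbf{1}$ with $Y(\mathbf{1};x_0,\mathbf{x})v=v$, $Y(v;x_0,\mathbf{x})\mathbf{1}\in V[[x_0,x_1^{\pm1},\dots,x_r^{\pm1}]]$, and the Jacobi identity $$z_0^{-1}\delta\!\left(\tfrac{x_0-y_0}{z_0}\right)Y(u;x_0,\mathbf{z}\mathbf{y})Y(v;y_0,\mathbf{y})-z_0^{-1}\delta\!\left(\tfrac{y_0-x_0}{-z_0}\right)Y(v;y_0,\mathbf{y})Y(u;x_0,\mathbf{z}\mathbf{y})=y_0^{-1}\delta\!\left(\tfrac{x_0-z_0}{y_0}\right)Y(Y(u;z_0,\mathbf{z})v;y_0,\mathbf{y})$$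 for all $u,v$, where $Y(u;x_0,\mathbf{z}\mathbf{y})=\sum u_{m_0,\mathbf{m}}x_0^{-m_0-1}\mathbf{z}^{-\mathbf{m}}\mathbf{y}^{-\mathbf{m}}$. An ideal is a subspace $I$ with $u_{m_0,\mathbf{m}}v\in I$ whenever $u\in I$ or $v\in I$; a toroidal vertex algebra is simple if its only ideals are $0$ and itself. $V^0=\mathrm{span}\{v_{m_0,\mathbf{m}}\mathbf{1}\mid v\in V,(m_0,\mathbf{m})\in\mathbb{Z}\times\mathbb{Z}^r\}$ is a toroidal vertex subalgebra of $V$. *)

(* Defs.v *)
From HB Require Import structures.
From mathcomp Require Import all_boot all_order all_algebra.
Set Implicit Arguments. Unset Strict Implicit. Unset Printing Implicit Defensive.
Import Order.TTheory GRing.Theory Num.Theory.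
Local Open Scope ring_scope.

(* A "mode map" mode u m0 m v stands for
   u_{m0,m} v, i.e. Y(u;x0,x) = sum u_{m0,m} x0^{-m0-1} x^{-m}. *)

Definition modes (V : Type) (r : nat) := V -> int -> 'rV[int]_r -> V -> V.

Definition binz (l : int) (i : nat) : int :=
  match l with
  | Posz n => ('C(n, i))%:Z
  | Negz k => (-1) ^+ i * ('C(k + i, i))%:Z
  end.

(* Toroidal vertex algebra axioms, the Jacobi identity being written out
   coefficientwise (coefficient of z0^{-l-1} x0^{-m0-1} y0^{-n0-1}
   z^{-m} y^{-p} applied to w); both sides are finite sums by truncation,
   so we require equality of all sufficiently long partial sums. *)
Definition is_tva (F : fieldType) (V : lmodType F) (r : nat)
    (mode : modes V r) (one : V) : Prop :=
      (forall m0 m w (a : F) u1 u2,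
         mode (a *: u1 + u2) m0 m w = a *: mode u1 m0 m w + mode u2 m0 m w) /\
      (forall u m0 m (a : F) w1 w2,
         mode u m0 m (a *: w1 + w2) = a *: mode u m0 m w1 + mode u m0 m w2) /\
      (* Y(u;x0,x)v lies in V[[x^{+-1}]]((x0)) *)
      (forall u v, exists N : int, forall m0 m, N <= m0 -> mode u m0 m v = 0) /\
      (forall v m0 m, mode one m0 m v = if (m0 == -1) && (m == 0) then v else 0) /\
    (* Y(v;x0,x)1 lies in V[[x0, x^{+-1}]] *)
    (forall v m0 m, 0 <= m0 -> mode v m0 m one = 0) /\
    (forall u v w (l m0 n0 : int) (m p : 'rV[int]_r),
       exists N : nat, forall M : nat, (N <= M)%N ->
         \sum_(i < M) (binz m0 i)%:~R *:
            mode (mode u (l + (i : nat)%:Z) m v) (m0 + n0 - (i : nat)%:Z) p w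
         = \sum_(i < M) ((-1) ^+ i * (binz l i)%:~R) *:
            (mode u (m0 + l - (i : nat)%:Z) m (mode v (n0 + (i : nat)%:Z) (p - m) w)
             - (-1) ^ l *:
               mode v (n0 + l - (i : nat)%:Z) (p - m) (mode u (m0 + (i : nat)%:Z) m w))).

Definition is_subspace (F : fieldType) (V : lmodType F) (S : V -> Prop) : Prop :=
  S 0 /\ forall (a : F) u v, S u -> S v -> S (a *: u + v).

(* ideals of the subalgebra with carrier S (a subspace closed under the
   modes); for S = everything, these are the ideals of the algebra itself *)
Definition is_ideal_in (F : fieldType) (V : lmodType F) (r : nat)
    (S : V -> Prop) (mode : modes V r) (I : V -> Prop) : Prop :=
  [/\ is_subspace I, (forall v, I v -> S v) &
      forall u v m0 m, S u -> S v -> (I u \/ I v) -> I (mode u m0 m v)].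

Definition simple_in (F : fieldType) (V : lmodType F) (r : nat)
    (S : V -> Prop) (mode : modes V r) : Prop :=
  forall I, is_ideal_in S mode I ->
    (forall v, I v -> v = 0) \/ (forall v, S v -> I v).

Definition simple_tva (F : fieldType) (V : lmodType F) (r : nat)
    (mode : modes V r) : Prop := simple_in (fun _ => True) mode.

Definition KY (F : fieldType) (V : lmodType F) (r : nat) (mode : modes V r)
    (v : V) : Prop := forall m0 m w, mode v m0 m w = 0.

(* V^0 = span { v_{m0,m} 1 } : smallest subspace containing all v_{m0,m} 1 *)
Definition V0 (F : fieldType) (V : lmodType F) (r : nat) (mode : modes V r)
    (one : V) (x : V) : Prop :=
  forall S : V -> Prop, is_subspace S ->
    (forall v m0 m, S (mode v m0 m one)) -> S x.

(* Main.v *)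
Require Import Defs.
From HB Require Import structures.
From mathcomp Require Import all_boot all_order all_algebra.
Import Order.TTheory GRing.Theory Num.Theory.
Local Open Scope ring_scope.
Set Implicit Arguments. Unset Strict Implicit.

Lemma mode0l (F : fieldType) (V : lmodType F) r (mode : modes V r) one
  (hV : is_tva mode one) m0 m w : mode 0 m0 m w = 0.
Proof.
case: hV => linl _.
have := linl m0 m w 1 0 0; rewrite !scale1r addr0 => h.
by apply: (addrI (mode 0 m0 m w)); rewrite addr0 -h.
Qed.

Lemma mode0r (F : fieldType) (V : lmodType F) r (mode : modes V r) one
  (hV : is_tva mode one) u m0 m : mode u m0 m 0 = 0.
Proof.
case: hV => _ [linr _].
have := linr u m0 m 1 0 0; rewrite !scale1r addr0 => h.
by apply: (addrI (mode u m0 m 0)); rewrite addr0 -h.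
Qed.

Lemma binz0 (a : int) : binz a 0 = 1.
Proof. by case: a => n /=; rewrite bin0 // mulr1. Qed.

Lemma lemA (F : fieldType) (V : lmodType F) r (mode : modes V r) one
  (hV : is_tva mode one) u g a b Q :
  mode u a b (mode g (-1) Q one) = mode (mode u a b g) (-1) (Q + b) one.
Proof.
have z0l := mode0l hV; have z0r := mode0r hV.
case: hV => _ [_ [_ [oneax [vac jac]]]].
have [N HN] := jac u g one a 0 (-1) b (Q + b).
have := HN N.+1 (leqnSn N).
rewrite !big_ord_recl.
rewrite big1; last by move=> i _; rewrite lift0 /= scale0r.
rewrite big1; last first.
  move=> i _; rewrite lift0.
  have h1 : (0 : int) <= -1 + (i.+1)%:Z by rewrite -[Posz i.+1]/(1 + i%:Z) addKr.
  have h2 : (0 : int) <= 0 + (i.+1)%:Z by rewrite add0r.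
  by rewrite [mode u (0 + _) b one]vac // [mode g (-1 + _) _ one]vac // !z0r scaler0 subr0 scaler0.
rewrite /= !binz0 mul1r scale1r !addr0 !sub0r add0r addrK.
by rewrite [mode u 0 b one]vac // z0r scaler0 subr0 scale1r => ->.
Qed.
From mathcomp Require Import zify.
Lemma L2 (F : fieldType) (V : lmodType F) r (mode : modes V r) one
  (hV : is_tva mode one) u m0 m w :
  mode (mode u (-1) m one) m0 m w = mode u m0 m w.
Proof.
have z0l := mode0l hV; have z0r := mode0r hV.
case: hV => _ [_ [_ [oneax [vac jac]]]].
have [N HN] := jac u one w (-1) m0 0 m m.
have := HN N.+1 (leqnSn N).
rewrite !big_ord_recl.
rewrite big1; last first.
  move=> i _; rewrite lift0.
  have h1 : (0 : int) <= -1 + (i.+1)%:Z by rewrite -[Posz i.+1]/(1 + i%:Z) addKr.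
  by rewrite vac // z0l scaler0.
rewrite big1; last first.
  move=> i _; rewrite lift0 !oneax.
  have -> : (0 + (i.+1)%:Z == -1) = false by apply/eqP; lia.
  have -> : (0 + -1 - (i.+1)%:Z == -1) = false by apply/eqP; lia.
  by rewrite /= z0r scaler0 subr0 scaler0.
rewrite /= expr0 mul1r bin0 scale1r !addr0 !oneax subrr eqxx.
have -> : ((0:int) == -1) = false by [].
by rewrite /= z0r sub0r eqxx binz0 scale1r exprN1 invrN1 scaleN1r opprK.
Qed.


Lemma oneone (F : fieldType) (V : lmodType F) r (mode : modes V r) one
  (hV : is_tva mode one) : mode one (-1) 0 one = one.
Proof. by case: hV => _ [_ [_ [oneax _]]]; rewrite oneax !eqxx. Qed.

Lemma L1a (F : fieldType) (V : lmodType F) r (mode : modes V r) one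
  (hV : is_tva mode one) u a b :
  mode (mode u a b one) (-1) b one = mode u a b one.
Proof. by rewrite -[in RHS](oneone hV) (lemA hV) add0r. Qed.

Lemma L1b (F : fieldType) (V : lmodType F) r (mode : modes V r) one
  (hV : is_tva mode one) u a b p : p != b ->
  mode (mode u a b one) (-1) p one = 0.
Proof.
move=> hpb; have := lemA hV u one a b (p - b); rewrite subrK => <-.
have z0r := mode0r hV.
case: hV => _ [_ [_ [oneax _]]]; rewrite oneax subr_eq0 (negbTE hpb) andbF.
exact: z0r.
Qed.

Lemma V0_sub (F : fieldType) (V : lmodType F) r (mode : modes V r) one :
  is_subspace (V0 mode one).
Proof.
split; first by move=> S [S0 _] _.
move=> a u v hu hv S hS hg; case: (hS) => _ hc; apply: hc; [exact: hu hS hg | exact: hv hS hg].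
Qed.

Lemma V0_gen (F : fieldType) (V : lmodType F) r (mode : modes V r) one v m0 m :
  V0 mode one (mode v m0 m one).
Proof. by move=> S _ hg. Qed.

Lemma V0_one (F : fieldType) (V : lmodType F) r (mode : modes V r) one
  (hV : is_tva mode one) : V0 mode one one.
Proof. by have := @V0_gen _ _ _ mode one one (-1) 0; rewrite (oneone hV). Qed.

Lemma V0_left (F : fieldType) (V : lmodType F) r (mode : modes V r) one
  (hV : is_tva mode one) x : V0 mode one x -> forall u a b, V0 mode one (mode u a b x).
Proof.
move=> hx; apply: (hx (fun x => forall u a b, V0 mode one (mode u a b x))).
  split; first by move=> u a b; rewrite (mode0r hV); case: (@V0_sub _ _ _ mode one).
  move=> c y z hy hz u a b; case: (hV) => _ [linr _]; rewrite linr.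
  by case: (@V0_sub _ _ _ mode one) => _ hc; apply: hc.
move=> g n q u a b.
by rewrite -(L1a hV g n q) (lemA hV); apply: V0_gen.
Qed.

Lemma K0 (F : fieldType) (V : lmodType F) r (mode : modes V r) one
  (hV : is_tva mode one) x : V0 mode one x -> KY mode x -> x = 0.
Proof.
move=> hx hk.
pose S := fun x : V => exists s : seq 'rV[int]_r, forall t, uniq t -> {subset s <= t} ->
   x = \sum_(p <- t) mode x (-1) p one.
have : S x.
  apply: hx.
    split.
      exists [::] => t _ _; rewrite big1 // => p _; exact: (mode0l hV).
    move=> c y z [s hs] [s' hs']; exists (s ++ s') => t ut st.
    have e1 : {subset s <= t} by move=> p ps; apply: st; rewrite mem_cat ps.
    have e2 : {subset s' <= t} by move=> p ps; apply: st; rewrite mem_cat ps orbT.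
    rewrite {1}(hs t ut e1) {1}(hs' t ut e2) scaler_sumr -big_split /=.
    apply: eq_bigr => p _; case: (hV) => linl _; by rewrite linl.
  move=> v m0 m; exists [:: m] => t ut st.
  rewrite (bigD1_seq m) ?st ?mem_head //= (L1a hV) big1 ?addr0 //.
  by move=> p hp; apply: (L1b hV).
case=> s hs; rewrite (hs (undup s) (undup_uniq s)); last by move=> p; rewrite mem_undup.
by rewrite big1 // => p _; apply: hk.
Qed.

Unset Implicit Arguments. Set Strict Implicit.

Theorem proposition2p23 (F : fieldType) (hF : [pchar F] =i pred0) (r : nat)
    (V : lmodType F) (mode : modes V r) (one : V) (hV : is_tva mode one)
    (W : lmodType F) (modeW : modes W r) (oneW : W) (hW : is_tva modeW oneW)
    (pi : {linear V -> W})
    (pi_surj : forall w : W, exists v : V, pi v = w)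
    (pi_ker : forall v : V, pi v = 0 <-> KY mode v)
    (pi_mode : forall u v m0 m, pi (mode u m0 m v) = modeW (pi u) m0 m (pi v))
    (pi_one : pi one = oneW) :
  simple_tva modeW <-> simple_in (V0 mode one) mode.
Proof.
have z0l := mode0l hV; have z0r := mode0r hV.
have [linl [linr _]] := hV.
have V0s := @V0_sub _ _ _ mode one.
have V0o := V0_one hV.
have hWone : forall x, modeW oneW (-1) 0 x = x.
  by case: hW => _ [_ [_ [oax _]]] x; rewrite oax !eqxx.
have hVone : forall x, mode one (-1) 0 x = x.
  by case: hV => _ [_ [_ [oax _]]] x; rewrite oax !eqxx.
split.
- move=> simW I0 [I0s I0V I0m].
  pose It := fun v => forall b, I0 (mode v (-1) b one).
  have KIt : forall v, KY mode v -> It v by move=> v hv b; rewrite hv; case: I0s.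
  have Itsub : is_subspace It.
    split; first by move=> b; rewrite z0l; case: I0s.
    move=> c x y hx hy b; rewrite linl; case: I0s => _ hc; exact: hc.
  have It_pi : forall u u', It u' -> pi u = pi u' -> It u.
    move=> u u' hu' e.
    have hk : KY mode (u - u') by apply/pi_ker; rewrite linearB e subrr.
    by have := Itsub.2 1 _ _ (KIt _ hk) hu'; rewrite scale1r subrK.
  pose J := fun w => exists v, It v /\ pi v = w.
  have Jid : is_ideal_in (fun _ => True) modeW J.
    split.
    + split; first by exists 0; split; [exact: Itsub.1 | exact: linear0].
      move=> c w1 w2 [v1 [h1 <-]] [v2 [h2 <-]]; exists (c *: v1 + v2); split.
        exact: Itsub.2.
      by rewrite linearP.
    + by [].
    + move=> w1 w2 m0 m _ _ hor.
      have [u hu] := pi_surj w1; have [v hv] := pi_surj w2.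
      exists (mode u m0 m v); split; last by rewrite pi_mode hu hv.
      move=> b; have -> : b = (b - m) + m by rewrite subrK.
      rewrite -(lemA hV u v m0 m (b - m)) -(L2 hV u m0 m).
      case: hor => [[u' [hu' e]]|[v' [hv' e]]].
      * have hU : It u by apply: (It_pi _ u' hu'); rewrite e hu.
        by apply: I0m; [exact: V0_gen | exact: V0_gen | left; exact: hU].
      * have hU : It v by apply: (It_pi _ v' hv'); rewrite e hv.
        by apply: I0m; [exact: V0_gen | exact: V0_gen | right; exact: hU].
  case: (simW J Jid) => [J0|Jall].
  + left => x hx.
    have hxt : It x by move=> b; apply: I0m; [exact: I0V | exact: V0o | left].
    apply: (K0 hV (I0V _ hx)); apply/pi_ker; apply: J0; exists x; split => //.
  + right => x hx.
    have [v [hv e]] := Jall oneW I.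
    have ho : It one by apply: (It_pi _ v hv); rewrite e pi_one.
    have := ho 0; rewrite hVone => ho'.
    by rewrite -[x]hVone; apply: I0m => //; left.
- move=> simV J [Js _ Jm].
  pose I0 := fun v => V0 mode one v /\ J (pi v).
  have I0id : is_ideal_in (V0 mode one) mode I0.
    split.
    + split; first by split; [exact: V0s.1 | rewrite linear0; exact: Js.1].
      move=> c x y [hx1 hx2] [hy1 hy2]; split; first exact: V0s.2.
      by rewrite linearP; apply: Js.2.
    + by move=> v [].
    + move=> u v m0 m hu hv hor; split; first exact: V0_left.
      rewrite pi_mode; apply: Jm => //.
      by case: hor => [[_ h]|[_ h]]; [left|right].
  case: (simV I0 I0id) => [I00|I0all].
  + left => w hw.
    have [u hu] := pi_surj w; subst w.
    have hu0 : forall m0 m, mode u m0 m one = 0.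
      move=> m0 m; apply: I00; split; first exact: V0_gen.
      by rewrite pi_mode pi_one; apply: Jm => //; left.
    apply/(pi_ker u) => m0 m x; by rewrite -(L2 hV) hu0 z0l.
  + right => w _.
    have [_ hJo] := I0all one V0o; rewrite pi_one in hJo.
    by rewrite -[w]hWone; apply: Jm => //; left.
Qed.
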